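(* Let $\bar L^g>0$, $\gamma_0>0$, $\beta_0:=\bar L^g/\gamma_0$, and let $c_k\in(-1,1]$ for $k\ge0$. Define $a_0:=\big(1+c_0+\sqrt{4(1-c_0)+(1+c_0)^2}\big)/2$, $a_{k+1}:=\big(1+c_{k+1}+\sqrt{4a_k^2+(1-c_{k+1})^2}\big)/2$, $\tau_k:=a_k^{-1}$, $\beta_{k+1}:=(1-\tau_k)\beta_k$, $\gamma_{k+1}:=(1-c_k\tau_k)\gamma_k$, and $s_k:=\sum_{i=1}^kc_i$. Then for all $k\ge0$, $$\frac{k+a_0+s_k}{2}\le a_k\le k+a_0,\qquad \frac{\bar L^g}{(k+a_0)^2}\le\gamma_{k+1}\beta_{k+1}\le\frac{4\bar L^g}{(k+a_0+s_k)^2}.$$ Moreover, if $c_k=0$ for all $k$, then $\frac{\beta_0}{(k+2)^2}\le\beta_{k+1}\le\frac{4\beta_0}{(k+1)^2}$, and if $c_k=1$ for all $k$, then $\beta_{k+1}=\frac{\beta_0}{k+2}$. *)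

(* Defs.v *)
From Stdlib Require Import Reals Lra.
Open Scope R_scope.

Fixpoint aseq (c : nat -> R) (k : nat) : R :=
  match k with
  | O => (1 + c O + sqrt (4 * (1 - c O) + (1 + c O) ^ 2)) / 2
  | S j => (1 + c (S j) + sqrt (4 * (aseq c j) ^ 2 + (1 - c (S j)) ^ 2)) / 2
  end.

Definition tau (c : nat -> R) (k : nat) : R := / aseq c k.

Fixpoint beta (Lg gamma0 : R) (c : nat -> R) (k : nat) : R :=
  match k with
  | O => Lg / gamma0
  | S j => (1 - tau c j) * beta Lg gamma0 c j
  end.

Fixpoint gamma (gamma0 : R) (c : nat -> R) (k : nat) : R :=
  match k with
  | O => gamma0
  | S j => (1 - c j * tau c j) * gamma gamma0 c j
  end.

Fixpoint sseq (c : nat -> R) (k : nat) : R :=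
  match k with
  | O => 0
  | S j => sseq c j + c (S j)
  end.

(* Main.v *)
Require Import Defs.
From Stdlib Require Import Reals Lra Lia Psatz.
Open Scope R_scope.

Lemma sqr_le (s t : R) : 0 <= s -> 0 <= t -> s * s <= t * t -> s <= t.
Proof. intros; nra. Qed.

Lemma sqrt_facts (x : R) : 0 <= x -> 0 <= sqrt x /\ sqrt x * sqrt x = x.
Proof. intros; split; [apply sqrt_pos | apply sqrt_sqrt; auto]. Qed.

Section S.
Variable c : nat -> R.
Hypothesis hc : forall k, -1 < c k <= 1.

Lemma a0_facts : 1 < aseq c 0 /\ (aseq c 0 - 1) * (aseq c 0 - c 0) = 1.
Proof.
  simpl. destruct (hc 0).
  destruct (sqrt_facts (4 * (1 - c 0) + (1 + c 0) ^ 2)) as [H1 H2]; [nra|].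
  set (s := sqrt _) in *.
  assert (2 <= s). { apply sqr_le; nra. }
  split; nra.
Qed.

Lemma step_facts k : 1 < aseq c k ->
  aseq c k + (1 + c (S k)) / 2 <= aseq c (S k) /\
  aseq c (S k) <= aseq c k + 1 /\
  (aseq c (S k) - 1) * (aseq c (S k) - c (S k)) = aseq c k ^ 2.
Proof.
  intro Ha. cbn [aseq]. destruct (hc (S k)).
  set (A := aseq c k) in *.
  destruct (sqrt_facts (4 * A ^ 2 + (1 - c (S k)) ^ 2)) as [H1 H2]; [nra|].
  set (s := sqrt _) in *.
  assert (2 * A <= s). { apply sqr_le; nra. }
  assert (s <= 2 * A + (1 - c (S k))). { apply sqr_le; nra. }
  split; [|split]; nra.
Qed.

Lemma a_gt1 k : 1 < aseq c k.
Proof.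
  induction k. apply a0_facts.
  destruct (step_facts k IHk) as [H _]. destruct (hc (S k)). lra.
Qed.

Lemma a_ident k : (aseq c (S k) - 1) * (aseq c (S k) - c (S k)) = aseq c k ^ 2.
Proof. apply step_facts, a_gt1. Qed.

Lemma a_upper k : aseq c k <= INR k + aseq c 0.
Proof.
  induction k. simpl; lra.
  destruct (step_facts k (a_gt1 k)) as [_ [H _]]. rewrite S_INR. lra.
Qed.

Lemma a_lower k : aseq c 0 + (INR k + sseq c k) / 2 <= aseq c k.
Proof.
  induction k. simpl; lra.
  destruct (step_facts k (a_gt1 k)) as [H _]. rewrite S_INR. simpl sseq. lra.
Qed.

Lemma sseq_gt k : - INR k <= sseq c k.
Proof.
  induction k. simpl; lra. rewrite S_INR. simpl. destruct (hc (S k)). lra.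
Qed.

Lemma gb_prod Lg gamma0 k : 0 < gamma0 ->
  gamma gamma0 c (S k) * beta Lg gamma0 c (S k) = Lg / aseq c k ^ 2.
Proof.
  intro hg.
  assert (E : forall j, (1 - c j * tau c j) * (1 - tau c j) =
     (aseq c j - c j) * (aseq c j - 1) / aseq c j ^ 2).
  { intro j. unfold tau. pose proof (a_gt1 j). field. lra. }
  induction k.
  - change ((1 - c 0 * tau c 0) * gamma0 * ((1 - tau c 0) * (Lg / gamma0)) = Lg / aseq c 0 ^ 2).
    replace ((1 - c 0 * tau c 0) * gamma0 * ((1 - tau c 0) * (Lg / gamma0)))
      with ((1 - c 0 * tau c 0) * (1 - tau c 0) * Lg) by (field; lra).
    rewrite E. destruct a0_facts as [H1 H2].
    replace ((aseq c 0 - c 0) * (aseq c 0 - 1)) with 1 by lra. field. lra.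
  - change ((1 - c (S k) * tau c (S k)) * gamma gamma0 c (S k) *
      ((1 - tau c (S k)) * beta Lg gamma0 c (S k)) = Lg / aseq c (S k) ^ 2).
    replace ((1 - c (S k) * tau c (S k)) * gamma gamma0 c (S k) *
      ((1 - tau c (S k)) * beta Lg gamma0 c (S k)))
      with ((1 - c (S k) * tau c (S k)) * (1 - tau c (S k)) *
            (gamma gamma0 c (S k) * beta Lg gamma0 c (S k))) by ring.
    rewrite IHk, E.
    replace ((aseq c (S k) - c (S k)) * (aseq c (S k) - 1)) with (aseq c k ^ 2)
      by (rewrite <- a_ident; ring).
    pose proof (a_gt1 k); pose proof (a_gt1 (S k)). field. lra.
Qed.

End S.

Lemma div_sq_le L x y : 0 < L -> 0 < x -> x <= y -> L / y ^ 2 <= L / x ^ 2.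
Proof.
  intros. unfold Rdiv. apply Rmult_le_compat_l; [lra|].
  apply Rinv_le_contravar; [apply pow_lt; lra | apply pow_incr; lra].
Qed.

Theorem lemma4p4 (Lg gamma0 : R) (c : nat -> R)
  (hL : 0 < Lg) (hg : 0 < gamma0)
  (hc : forall k, -1 < c k <= 1) :
  (forall k : nat,
     (INR k + aseq c 0 + sseq c k) / 2 <= aseq c k /\
     aseq c k <= INR k + aseq c 0 /\
     Lg / (INR k + aseq c 0) ^ 2
       <= gamma gamma0 c (S k) * beta Lg gamma0 c (S k) /\
     gamma gamma0 c (S k) * beta Lg gamma0 c (S k)
       <= 4 * Lg / (INR k + aseq c 0 + sseq c k) ^ 2)
  /\
  ((forall k, c k = 0) ->
     forall k : nat,
       beta Lg gamma0 c 0 / (INR k + 2) ^ 2 <= beta Lg gamma0 c (S k) /\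
       beta Lg gamma0 c (S k) <= 4 * beta Lg gamma0 c 0 / (INR k + 1) ^ 2)
  /\
  ((forall k, c k = 1) ->
     forall k : nat, beta Lg gamma0 c (S k) = beta Lg gamma0 c 0 / (INR k + 2)).
Proof.
  split; [|split].
  - intro k.
    pose proof (a_lower c hc k) as Hl. pose proof (a_upper c hc k) as Hu.
    pose proof (a_gt1 c hc k) as Hg. pose proof (a_gt1 c hc 0) as Hg0.
    pose proof (sseq_gt c hc k) as Hs. pose proof (pos_INR k).
    rewrite (gb_prod c hc Lg gamma0 k hg).
    split; [lra|split; [lra|split]].
    + apply div_sq_le; lra.
    + replace (4 * Lg / (INR k + aseq c 0 + sseq c k) ^ 2)
        with (Lg / ((INR k + aseq c 0 + sseq c k) / 2) ^ 2)
        by (field; lra).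
      apply div_sq_le; lra.
  - intros H0 k.
    assert (hc' : forall k, -1 < c k <= 1) by (intro j; rewrite H0; lra).
    assert (Gm : forall j, gamma gamma0 c j = gamma0).
    { induction j; simpl; [auto|]. rewrite H0, IHj. ring. }
    assert (Ss : forall j, sseq c j = 0).
    { induction j; simpl; [auto|]. rewrite H0, IHj. ring. }
    pose proof (gb_prod c hc Lg gamma0 k hg) as P. rewrite Gm in P.
    assert (B : beta Lg gamma0 c (S k) = (Lg / gamma0) / aseq c k ^ 2).
    { apply (Rmult_eq_reg_l gamma0); [|lra]. rewrite P. field.
      pose proof (a_gt1 c hc k); lra. }
    change (beta Lg gamma0 c 0) with (Lg / gamma0). rewrite B.
    assert (0 < Lg / gamma0) by (apply Rdiv_lt_0_compat; lra).
    pose proof (a_lower c hc k) as Hl. pose proof (a_upper c hc k) as Hu.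
    pose proof (a_gt1 c hc k) as Hg. pose proof (a_gt1 c hc 0) as Hg0.
    pose proof (pos_INR k). rewrite Ss in Hl.
    assert (aseq c 0 <= 2).
    { cbn [aseq]. rewrite H0.
      destruct (sqrt_facts (4 * (1 - 0) + (1 + 0) ^ 2)) as [Q1 Q2]; [lra|].
      assert (sqrt (4 * (1 - 0) + (1 + 0) ^ 2) <= 3) by (apply sqr_le; lra).
      lra. }
    split.
    + apply div_sq_le; lra.
    + replace (4 * (Lg / gamma0) / (INR k + 1) ^ 2)
        with ((Lg / gamma0) / ((INR k + 1) / 2) ^ 2) by (field; lra).
      apply div_sq_le; lra.
  - intros H1.
    assert (A : forall j, aseq c j = INR j + 2).
    { induction j.
      - cbn [aseq]. change (INR 0) with 0. rewrite H1.
        destruct (sqrt_facts (4 * (1 - 1) + (1 + 1) ^ 2)) as [Ha Hb]; [lra|].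
        assert (sqrt (4 * (1 - 1) + (1 + 1) ^ 2) <= 2) by (apply sqr_le; lra).
        assert (2 <= sqrt (4 * (1 - 1) + (1 + 1) ^ 2)) by (apply sqr_le; lra).
        lra.
      - cbn [aseq]. rewrite H1, IHj, S_INR. pose proof (pos_INR j).
        set (x := 4 * (INR j + 2) ^ 2 + (1 - 1) ^ 2).
        destruct (sqrt_facts x) as [Ha Hb]; [unfold x; nra|].
        assert (sqrt x <= 2 * (INR j + 2)) by (apply sqr_le; unfold x in *; nra).
        assert (2 * (INR j + 2) <= sqrt x) by (apply sqr_le; unfold x in *; nra).
        lra. }
    assert (B : forall j, beta Lg gamma0 c j = beta Lg gamma0 c 0 / (INR j + 1)).
    { induction j.
      - simpl. field. lra.
      - change (beta Lg gamma0 c (S j)) with ((1 - tau c j) * beta Lg gamma0 c j).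
        rewrite IHj. unfold tau. rewrite A, S_INR. pose proof (pos_INR j).
        field. lra. }
    intro k. rewrite B, S_INR. f_equal. ring.
Qed.
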